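(* Let $\lambda \in \mathbb{C}\setminus\{0\}$ and $\ast \in \{p,m\}$. The two eigenvalues (counted with multiplicity) of the transfer matrix $T_\ast = T_\ast(\lambda)$ have equal modulus if and only if \[ \lambda + \lambda^{-1} \in \mathbb{R} \quad\text{and}\quad \bigl(\lambda + \lambda^{-1} - 2 p a_\ast \cosh(2\gamma)\bigr)^2 - 4|b_\ast q|^2 \le 0 . \] Consequently, $\lambda \notin \Lambda$ if and only if these two conditions hold for at least one $\ast \in \{p,m\}$.
   Context: Fix $\gamma \in \mathbb{R}$, $p \in (-1,1)$, $q \in \mathbb{C}$ with $p^2 + |q|^2 = 1$, and for $\ast \in \{p,m\}$ fix $a_\ast \in (-1,1)$, $b_\ast \in \mathbb{C}$ with $a_\ast^2 + |b_\ast|^2 = 1$ (so $q \neq 0$, $b_\ast \neq 0$). For $\lambda \in \mathbb{C}\setminus\{0\}$ and $\ast \in \{p,m\}$ define the $2\times 2$ transfer matrix \[ T_\ast = \frac{1}{b_\ast q \lambda}\begin{pmatrix} \lambda^2 - 2 a_\ast p \cosh(2\gamma)\lambda + a_\ast^2 & -\overline{b_\ast}\,(p\lambda - a_\ast e^{2\gamma}) \\ -b_\ast\,(p\lambda - a_\ast e^{-2\gamma}) & |b_\ast|^2 \end{pmatrix}. \] Define $\Lambda$ to be the set of $\lambda \in \mathbb{C}\setminus\{0\}$ such that, for each $\ast \in \{p,m\}$, the two eigenvalues of $T_\ast$ have distinct moduli. *)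

(* Defs.v *)
From HB Require Import structures.
From mathcomp Require Import all_boot all_order all_algebra.
From mathcomp Require Import reals sequences exp.
From mathcomp Require Import complex.
Set Implicit Arguments. Unset Strict Implicit. Unset Printing Implicit Defensive.
Import Order.TTheory GRing.Theory Num.Theory.
Local Open Scope ring_scope.
Local Open Scope complex_scope.

Definition coshR {R : realType} (x : R) : R := (expR x + expR (- x)) / 2.

Definition transfer {R : realType} (gamma p : R) (q : complex R) (a : R) (b : complex R)
    (lam : complex R) : 'M[complex R]_2 :=
  (b * q * lam)^-1 *:
  \matrix_(i < 2, j < 2)
     match (val i), (val j) with
     | O, O => lam ^+ 2 - 2%:R * (a * p * coshR (2%:R * gamma))%:C * lam + (a ^+ 2)%:C
     | O, _ => - (b^*) * (p%:C * lam - (a * expR (2%:R * gamma))%:C)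
     | _, O => - b * (p%:C * lam - (a * expR (- (2%:R * gamma)))%:C)
     | _, _ => (`|b| ^+ 2)
     end.

Definition eig_equal_modulus {C : numClosedFieldType} (A : 'M[C]_2) : Prop :=
  exists mu1 mu2 : C,
    char_poly A = ('X - mu1%:P) * ('X - mu2%:P) /\ `|mu1| = `|mu2|.

Inductive star := Sp | Sm.

(* Main.v *)
Require Import Defs.
From HB Require Import structures.
From mathcomp Require Import all_boot all_order all_algebra.
From mathcomp Require Import reals sequences exp.
From mathcomp Require Import complex.
From mathcomp Require Import ring lra.
Import Order.TTheory GRing.Theory Num.Theory.
Local Open Scope ring_scope.

Lemma det2 (C : comNzRingType) (A : 'M[C]_2) : \det A = A 0 0 * A 1 1 - A 0 1 * A 1 0.
Proof.
rewrite (expand_det_row _ 0) !big_ord_recl big_ord0 addr0 /cofactor !det_mx11 /=.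
rewrite !mxE /=.
have -> : lift 0 0 = 1 :> 'I_2 by apply/val_inj.
have -> : lift 1 0 = 0 :> 'I_2 by apply/val_inj.
have -> : ord0 = 0 :> 'I_2 by apply/val_inj.
rewrite /= expr0 expr1 mul1r; ring.
Qed.

Lemma tr2 (C : comNzRingType) (A : 'M[C]_2) : \tr A = A 0 0 + A 1 1.
Proof.
rewrite /mxtrace !big_ord_recl big_ord0 addr0.
have -> : lift ord0 ord0 = 1 :> 'I_2 by apply/val_inj.
by have -> : ord0 = 0 :> 'I_2 by apply/val_inj.
Qed.

Lemma quad_split (C : comNzRingType) (m1 m2 : C) :
  ('X - m1%:P) * ('X - m2%:P) = 'X^2 - (m1 + m2)%:P * 'X + (m1 * m2)%:P :> {poly C}.
Proof. rewrite polyCD polyCM; ring. Qed.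

Lemma roots_eq (C : numClosedFieldType) (w s : C) (hw : `|w| = 1) :
  (exists mu1 mu2 : C, 'X^2 - (w*s)%:P * 'X + (w^+2)%:P = ('X - mu1%:P)*('X - mu2%:P)
      /\ `|mu1| = `|mu2|) <-> (s \is Num.real /\ s^+2 <= 4%:R).
Proof.
have w0 : w != 0 by apply/eqP => w0; move: hw; rewrite w0 normr0 => /eqP; rewrite eq_sym oner_eq0.
split.
- move=> [m1 [m2 [E Hn]]].
  have E0 := congr1 (fun P => P.[0]) E.
  have E1 := congr1 (fun P => P.[1]) E.
  move: E0 E1; rewrite /= !hornerE /= => E0 E1.
  have hprod : w ^+ 2 = m1 * m2.
    by move: E0; rewrite expr0n /= subrr add0r mulrNN.
  have hsum : w * s = m1 + m2.
    move: E1; rewrite expr1n => E1.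
    have -> : w * s = 1 + w^+2 - (1 - m1) * (1 - m2) by rewrite -E1; ring.
    rewrite hprod; ring.
  have hn1 : `|m1| = 1.
    have : `|m1| ^+ 2 = 1 ^+ 2.
      by rewrite expr2 {2}Hn -normrM -hprod normrX hw expr1n.
    by move/(pexpIrn (isT : (0 < 2)%N)); apply; rewrite qualifE /=.
  have m10 : m1 != 0 by rewrite -normr_eq0 hn1 oner_eq0.
  set v := m1 / w.
  have hv : `|v| = 1 by rewrite /v normrM normrV ?unitfE // hw hn1 invr1 mulr1.
  have hvc : v^* = v^-1.
    have : v * v^* = 1 by rewrite -normCK hv expr1n.
    move=> H; have v0 : v != 0 by rewrite -normr_eq0 hv oner_eq0.
    by apply: (mulfI v0); rewrite H divff.
  have hs : s = v + v^*.
    rewrite hvc /v invf_div.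
    apply: (mulfI w0); rewrite hsum mulrDr.
    have -> : m2 = w ^+ 2 / m1 by rewrite hprod mulrAC divff // mul1r.
    by field; rewrite m10 w0.
  split.
    by rewrite CrealE hs rmorphD /= conjCK addrC.
  have hsr : s \is Num.real by rewrite CrealE hs rmorphD /= conjCK addrC.
  rewrite -real_normK //.
  have : `|s| <= 2%:R by rewrite hs (le_trans (ler_normD _ _)) // norm_conjC hv.
  move=> H; have -> : (4%:R : C) = 2%:R ^+ 2 by rewrite expr2 -natrM.
  by apply: lerXn2r => //; rewrite qualifE /= ?ler0n.
- move=> [sr hs2].
  set r := sqrtC (4%:R - s ^+ 2).
  have r0 : 0 <= r by rewrite sqrtC_ge0 subr_ge0.
  have rr : r^* = r by apply/eqP; rewrite -CrealE ger0_real.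
  have sr' : s^* = s by apply/eqP; rewrite -CrealE.
  have r2 : r ^+ 2 = 4%:R - s ^+ 2 by rewrite sqrtCK.
  exists (w * ((s + 'i * r) / 2%:R)), (w * ((s - 'i * r) / 2%:R)).
  split.
    have i2 : 'i ^+ 2 = -1 :> C by rewrite sqrCi.
    have e1 : w * s = w * ((s + 'i * r) / 2%:R) + w * ((s - 'i * r) / 2%:R).
      by field.
    have e2 : w ^+ 2 = (w * ((s + 'i * r) / 2%:R)) * (w * ((s - 'i * r) / 2%:R)).
      have -> : (w * ((s + 'i * r) / 2%:R)) * (w * ((s - 'i * r) / 2%:R)) = w^+2 * (s^+2 - 'i^+2 * r^+2) / 4%:R.
        by field.
      by rewrite i2 r2; field.
    by rewrite e1 e2 polyCD polyCM; ring.
  have -> : (s - 'i * r) / 2%:R = ((s + 'i * r) / 2%:R)^*.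
    by rewrite rmorphM /= fmorphV /= rmorphD rmorphM /= conjCi rr sr' rmorph_nat mulNr.
  by rewrite normrM [in RHS]normrM norm_conjC.
Qed.

Lemma char_poly2 (C : comNzRingType) (A : 'M[C]_2) :
  char_poly A = 'X^2 - (\tr A)%:P * 'X + (\det A)%:P.
Proof.
rewrite /char_poly det2 /char_poly_mx tr2 det2 !mxE /=.
rewrite polyCD polyCB !polyCM; ring.
Qed.

Local Open Scope complex_scope.

Lemma one_star (R : realType) (gamma p : R) (q : complex R) (a : R) (b : complex R)
  (hp : -1 < p < 1) (hpq : (p ^+ 2)%:C + `|q| ^+ 2 = 1)
  (ha : -1 < a < 1) (hb : (a ^+ 2)%:C + `|b| ^+ 2 = 1) (lam : complex R) (lam0 : lam != 0) :
  eig_equal_modulus (transfer gamma p q a b lam) <->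
  ((lam + lam^-1) \is Num.real /\
    (lam + lam^-1 - 2%:R * (p * a * coshR (2%:R * gamma))%:C) ^+ 2
      - 4%:R * `|b * q| ^+ 2 <= 0).
Proof.
have q0 : q != 0.
  apply/eqP => q0; move: hpq; rewrite q0 normr0 expr0n /= addr0 => /(congr1 (fun z : R[i] => let: x +i* _ := z in x)) /= h.
  move: hp => /andP [h1 h2]; nra.
have b0 : b != 0.
  apply/eqP => b0; move: hb; rewrite b0 normr0 expr0n /= addr0 => /(congr1 (fun z : R[i] => let: x +i* _ := z in x)) /= h.
  move: ha => /andP [h1 h2]; nra.
set N := `|b * q|.
have N0 : N != 0 by rewrite normr_eq0 mulf_neq0.
have Npos : 0 < N by rewrite lt_def N0 normr_ge0.
set Ec := (expR (2%:R * gamma))%:C.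
have Ec0 : Ec != 0 by rewrite fmorph_eq0 gt_eqF // expR_gt0.
have hE : (expR (- (2%:R * gamma)))%:C = Ec^-1 by rewrite expRN fmorphV.
have hc : (a * p * coshR (2%:R * gamma))%:C = a%:C * p%:C * ((Ec + Ec^-1) / 2%:R).
  by rewrite /coshR !rmorphM /= fmorphV rmorphD /= hE rmorph_nat.
set K := (p * a * coshR (2%:R * gamma))%:C.
have hK : K = a%:C * p%:C * ((Ec + Ec^-1) / 2%:R) by rewrite -hc /K (mulrC p).
set w := N / (b * q).
set s := (lam + lam^-1 - 2%:R * K) / N.
have hw : `|w| = 1.
  by rewrite /w normrM normfV /N normr_id divff.
have hb' : `|b| ^+ 2 = 1 - a%:C ^+ 2 by rewrite -hb rmorphXn; ring.
have hq' : `|q| ^+ 2 = 1 - p%:C ^+ 2 by rewrite -hpq rmorphXn; ring.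
have hbb : (b^*)%R = `|b| ^+ 2 / b by rewrite normCK; field.
have hN2 : N ^+ 2 = `|b| ^+ 2 * `|q| ^+ 2 by rewrite /N normrM exprMn.
have htr : \tr (transfer gamma p q a b lam) = w * s.
  rewrite tr2 /transfer !mxE /= hc hb' /w /s hK.
  by field; rewrite ?N0 ?Ec0 lam0 q0 b0.
have hdet : \det (transfer gamma p q a b lam) = w ^+ 2.
  rewrite det2 /transfer !mxE /= hc !rmorphM /= hE hbb /w expr_div_n hN2 hq'.
  by field; rewrite ?N0 ?Ec0 lam0 q0 b0.
have hcp : char_poly (transfer gamma p q a b lam) = 'X^2 - (w * s)%:P * 'X + (w ^+ 2)%:P.
  by rewrite char_poly2 htr hdet.
apply: (@iff_trans _ (exists mu1 mu2 : R[i], 'X^2 - (w * s)%:P * 'X + (w ^+ 2)%:P = ('X - mu1%:P) * ('X - mu2%:P) /\ `|mu1| = `|mu2|)).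
  by split; move=> [m1 [m2 [E H]]]; exists m1, m2; rewrite ?hcp in E *.
apply: (iff_trans (@roots_eq _ w s hw)).
have Kr : K \is Num.real by apply/complex_realP; eexists.
have Nr : N \is Num.real by apply: normr_real.
have N2pos : 0 < N ^+ 2 by apply: exprn_gt0.
have hy : lam + lam^-1 - 2%:R * K = s * N by rewrite /s divfK.
have hs2 : s ^+ 2 = (lam + lam^-1 - 2%:R * K) ^+ 2 / N ^+ 2 by rewrite /s expr_div_n.
clearbody s.
split.
- move=> [sr sle]; split.
    have -> : lam + lam^-1 = s * N + 2%:R * K by rewrite -hy; ring.
    by rewrite rpredD ?rpredM ?rpred_nat.
  rewrite subr_le0 hy exprMn; apply: ler_wpM2r => //; exact: ltW.
- move=> [xr hle]; split.
    have -> : s = (lam + lam^-1 - 2%:R * K) / N by rewrite hy mulfK.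
    by rewrite rpredM ?rpredV // rpredB ?rpredM ?rpred_nat.
  by rewrite hs2 ler_pdivrMr // -subr_le0.
Qed.

Theorem lemma2p1 (R : realType) (gamma p : R) (q : complex R)
    (ap am : R) (bp bm : complex R)
    (hp : -1 < p < 1) (hpq : (p ^+ 2)%:C + `|q| ^+ 2 = 1)
    (hap : -1 < ap < 1) (hbp : (ap ^+ 2)%:C + `|bp| ^+ 2 = 1)
    (ham : -1 < am < 1) (hbm : (am ^+ 2)%:C + `|bm| ^+ 2 = 1) :
  let a := fun s : star => match s with Sp => ap | Sm => am end in
  let b := fun s : star => match s with Sp => bp | Sm => bm end in
  let T := fun (s : star) (lam : complex R) => transfer gamma p q (a s) (b s) lam in
  let cond := fun (s : star) (lam : complex R) =>
    (lam + lam^-1) \is Num.real /\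
    (lam + lam^-1 - 2%:R * (p * a s * coshR (2%:R * gamma))%:C) ^+ 2
      - 4%:R * `|b s * q| ^+ 2 <= 0 in
  let Lambda := fun lam : complex R =>
    lam != 0 /\ (forall s : star, ~ eig_equal_modulus (T s lam)) in
  (forall (lam : complex R) (s : star), lam != 0 ->
     (eig_equal_modulus (T s lam) <-> cond s lam)) /\
  (forall lam : complex R, lam != 0 ->
     (~ Lambda lam <-> exists s : star, cond s lam)).
Proof.
move=> a b T cond Lambda.
have P1 : forall (lam : complex R) (s : star), lam != 0 ->
     (eig_equal_modulus (T s lam) <-> cond s lam).
  move=> lam [] lam0; rewrite /T /cond /a /b.
    exact: one_star.
  exact: one_star.
split => // lam lam0; split.
- move=> HL.
  case Hp : (((lam + lam^-1) \is Num.real) &&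
    ((lam + lam^-1 - 2%:R * (p * a Sp * coshR (2%:R * gamma))%:C) ^+ 2
      - 4%:R * `|b Sp * q| ^+ 2 <= 0)).
    by move/andP: Hp => [h1 h2]; exists Sp.
  case Hm : (((lam + lam^-1) \is Num.real) &&
    ((lam + lam^-1 - 2%:R * (p * a Sm * coshR (2%:R * gamma))%:C) ^+ 2
      - 4%:R * `|b Sm * q| ^+ 2 <= 0)).
    by move/andP: Hm => [h1 h2]; exists Sm.
  exfalso; apply: HL; split => // -[] /(P1 lam _ lam0) [h1 h2].
    by move: Hp; rewrite h1 h2.
  by move: Hm; rewrite h1 h2.
- move=> [s Hs] [_ H]; apply: (H s); exact/(P1 lam s lam0).
Qed.
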